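(* Let $\Gamma'$ be the rank four incidence system defined in the context from the hemidodecahedron and its Petrie polygons. Then $\Gamma'$ is an incidence geometric representation for the group $A_5\times C_2$ (for which $\mathrm{Inn}(A_5\times C_2)\cong A_5$ and $\mathrm{Aut}(A_5\times C_2)\cong \mathrm{Sym}(5)$).
   Context: An incidence system is a quadruple $\Gamma=(X,*,t,I)$ where $X$ is a set of elements, $I$ a finite set of types, $t:X\to I$ a surjective type function, and $*$ a symmetric binary relation on $X$ (incidence) such that no two elements of the same type are incident. A correlation of $\Gamma$ is a permutation $\alpha$ of $X$ such that for all $x,y\in X$: $t(x)=t(y)\iff t(\alpha(x))=t(\alpha(y))$, and $x*y\iff \alpha(x)*\alpha(y)$. The correlations form a group $\mathrm{Aut}(\Gamma)$; its normal subgroup of type-preserving correlations is $\mathrm{Aut}_I(\Gamma)$. An incidence geometric representation for a group $G$ is an incidence system $\Gamma$ together with isomorphisms $\varphi_1:\mathrm{Inn}(G)\to\mathrm{Aut}_I(\Gamma)$ and $\varphi_2:\mathrm{Aut}(G)\to\mathrm{Aut}(\Gamma)$ with $\varphi_2|_{\mathrm{Inn}(G)}=\varphi_1$. Construction: the hemidodecahedron is the projective polyhedron obtained as the quotient of the regular dodecahedron by its central (antipodal) involution; it has 10 vertices, 15 edges and 6 pentagonal faces, and its vertex–edge graph is the Petersen graph. A Petrie polygon is a closed edge path in which any two consecutive edges, but no three consecutive edges, lie on a common face; the hemidodecahedron has 6 Petrie polygons, each a 5-cycle of the Petersen graph (the Petersen graph has twelve 5-cycles: the 6 faces and the 6 Petrie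 polygons). The elements of $\Gamma'$ of types $0,1,2,3$ are respectively the vertices, the edges, the faces and the Petrie polygons of the hemidodecahedron. Incidence among vertices, edges and faces is as in the hemidodecahedron (containment); a Petrie polygon is incident with the vertices and edges it contains; a face and a Petrie polygon are incident iff they share an edge. Thus the truncation of $\Gamma'$ to types $\{0,1,2\}$ is the hemidodecahedron and the truncation to types $\{0,1,3\}$ is isomorphic to it. *)

(* Defs.v *)
From HB Require Import structures.
From mathcomp Require Import all_boot all_fingroup all_solvable.
Set Implicit Arguments. Unset Strict Implicit. Unset Printing Implicit Defensive.
Local Open Scope group_scope.

Section IncidenceSystems.
Variables (X I : finType) (t : X -> I) (inc : rel X).

Definition is_incidence_system : Prop :=
  [/\ forall i : I, exists x : X, t x = i,
      forall x y, inc x y = inc y x &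
      forall x y, t x = t y -> ~~ inc x y].

Definition correlation (a : {perm X}) : bool :=
  [forall x, forall y, ((t x == t y) == (t (a x) == t (a y)))
                       && (inc x y == inc (a x) (a y))].

Definition AutGamma : {set {perm X}} := [set a | correlation a].
Definition AutIGamma : {set {perm X}} :=
  [set a in AutGamma | [forall x, t (a x) == t x]].
End IncidenceSystems.

Definition Inn (gT : finGroupType) (G : {group gT}) : {set {perm gT}} :=
  conj_aut G @* G.

Definition incidence_geometric_representation (gT : finGroupType)
  (G : {group gT}) (X I : finType) (t : X -> I) (inc : rel X) : Prop :=
  is_incidence_system t inc /\
  exists (phi1 phi2 : {perm gT} -> {perm X}),
    [/\ misom (Inn G) (AutIGamma t inc) phi1,
        misom (Aut G) (AutGamma t inc) phi2 &
        {in Inn G, phi2 =1 phi1}].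

(* Petersen graph: vertices are the 2-subsets of {0,..,4}, adjacent iff
   disjoint.  Every 5-cycle of the Petersen graph is the set of edges
   {s k, s (k+1)} of a pentagon (cyclic order s of {0..4}) of K5; the
   parity of s is well defined.  The 6 even ones form one orbit under
   Alt(5) and are taken as the faces of the hemidodecahedron; the 6 odd
   ones are then its Petrie polygons. *)
Definition pvertex (v : {set 'I_5}) : bool := #|v| == 2.

Definition pentagon (s : {perm 'I_5}) : {set {set 'I_5}} :=
  [set [set s k; s (ordS k)] | k : 'I_5].

(* an element is given by its type and its set of Petersen vertices *)
Definition hd_wf (p : 'I_4 * {set {set 'I_5}}) : bool :=
  match val p.1 with
  | 0 => [exists v, pvertex v && (p.2 == [set v])]
  | 1 => [exists v, exists w, [&& pvertex v, pvertex w, [disjoint v & w]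
                                & p.2 == [set v; w]]]
  | 2 => [exists s : {perm 'I_5}, ~~ odd_perm s && (p.2 == pentagon s)]
  | _ => [exists s : {perm 'I_5}, odd_perm s && (p.2 == pentagon s)]
  end.

Definition HDX := {p : 'I_4 * {set {set 'I_5}} | hd_wf p}.

Definition hd_type (x : HDX) : 'I_4 := (val x).1.

Definition share_edge (A B : {set {set 'I_5}}) : bool :=
  [exists v, exists w, [&& pvertex v, pvertex w, [disjoint v & w],
                          [set v; w] \subset A & [set v; w] \subset B]].

Definition hd_inc (x y : HDX) : bool :=
  (hd_type x != hd_type y) &&
  (if (val (hd_type x) >= 2) && (val (hd_type y) >= 2) then
     share_edge (val x).2 (val y).2
   else ((val x).2 \subset (val y).2) || ((val y).2 \subset (val x).2)).

(* The group A5 x C2 (C2 realised as bool under xor) *)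
Definition A5xC2 : {group {perm 'I_5} * bool} :=
  [group of setX (Alt 'I_5) [set: bool]].

(* Main.v *)
Require Import Defs.
From mathcomp Require Import all_boot all_fingroup all_solvable.
Set Implicit Arguments. Unset Strict Implicit. Unset Printing Implicit Defensive.
Local Open Scope group_scope.


Definition pc (s : {perm 'I_5}) : seq nat := [seq val (s (inord i : 'I_5)) | i <- iota 0 5].
Definition comp (s t : seq nat) : seq nat := [seq nth 0 t (nth 0 s i) | i <- iota 0 5].
Definition cid : seq nat := iota 0 5.

Lemma vinord x : x < 5 -> val (inord x : 'I_5) = x.
Proof. exact: inordK. Qed.

Lemma nth_pc s i : i < 5 -> nth 0 (pc s) i = val (s (inord i)).
Proof. by move=> hi; rewrite /pc (nth_map 0) ?size_iota // nth_iota. Qed.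

Lemma pcM s t : pc (s * t) = comp (pc s) (pc t).
Proof.
rewrite /comp {1}/pc; apply/eq_in_map => i; rewrite mem_iota /= => hi.
rewrite permM nth_pc // nth_pc ?ltn_ord //.
by rewrite inord_val.
Qed.

Lemma pc1 : pc 1 = cid.
Proof.
rewrite /pc /cid; rewrite -{2}(map_id (iota 0 5)); apply/eq_in_map => i.
by rewrite mem_iota /= perm1 => hi; rewrite vinord.

Qed.

Lemma pc_inj : injective pc.
Proof.
move=> s t e; apply/permP => x; apply/val_inj.
by rewrite -[x]inord_val -!nth_pc // e.
Qed.

Definition allp : seq (seq nat) := permutations cid.

Lemma pc_allp s : pc s \in allp.
Proof.
rewrite /allp mem_permutations; apply: uniq_perm; first 2 last.
- move=> x; rewrite /cid mem_iota /= add0n; apply/mapP/idP.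
    by case=> i _ ->; apply: ltn_ord.
  move=> hx; exists (val (s^-1 (inord x))); first by rewrite mem_iota /= add0n ltn_ord.
  by rewrite inord_val permKV vinord.
- rewrite map_inj_in_uniq ?iota_uniq // => i j; rewrite !mem_iota /= !add0n => hi hj.
  move/val_inj/perm_inj => /(congr1 val); rewrite !vinord //.
- by rewrite /cid iota_uniq.
Qed.

Definition tp (a b : nat) : {perm 'I_5} := tperm (inord a) (inord b).
Definition ctp (a b : nat) : seq nat :=
  [seq if i == a then b else if i == b then a else i | i <- iota 0 5].

Lemma pc_tp a b : a < 5 -> b < 5 -> pc (tp a b) = ctp a b.
Proof.
move=> ha hb; rewrite /pc /ctp; apply/eq_in_map => i; rewrite mem_iota /= => hi.
have E : forall x y, x < 5 -> y < 5 -> (inord x == inord y :> 'I_5) = (x == y).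
  by move=> x y hx hy; rewrite -(inj_eq val_inj) !vinord.
rewrite add0n in hi.
rewrite permE /= !E //; case: ifP => _; first by rewrite vinord.
by case: ifP => _; rewrite vinord.
Qed.

Lemma odd_tp a b : a < 5 -> b < 5 -> odd_perm (tp a b) = (a != b).
Proof. by move=> ha hb; rewrite odd_tperm -(inj_eq val_inj) !vinord. Qed.

Definition pA : {perm 'I_5} := tp 0 1 * tp 0 2.
Definition pB : {perm 'I_5} := tp 0 2 * tp 0 4 * tp 0 1 * tp 0 3.
Definition tau : {perm 'I_5} := tp 0 1.
Definition cA : seq nat := [:: 1; 2; 0; 3; 4]%N.
Definition cB : seq nat := [:: 2; 3; 4; 0; 1]%N.
Definition ctau : seq nat := [:: 1; 0; 2; 3; 4]%N.

Lemma pc_pA : pc pA = cA. Proof. by rewrite !pcM !pc_tp. Qed.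
Lemma pc_pB : pc pB = cB. Proof. by rewrite !pcM !pc_tp. Qed.
Lemma pc_tau : pc tau = ctau. Proof. by rewrite !pc_tp. Qed.
Lemma odd_pA : odd_perm pA = false. Proof. by rewrite !odd_permM !odd_tp. Qed.
Lemma odd_pB : odd_perm pB = false. Proof. by rewrite !odd_permM !odd_tp. Qed.
Lemma odd_tau : odd_perm tau = true. Proof. by rewrite !odd_tp. Qed.

Definition evalp (w : seq bool) : {perm 'I_5} :=
  foldr (fun b acc => (if b then pA else pB) * acc) 1 w.
Definition cevalp (w : seq bool) : seq nat :=
  foldr (fun b acc => comp (if b then cA else cB) acc) cid w.

Lemma pc_evalp w : pc (evalp w) = cevalp w.
Proof. by elim: w => [|b w IH] /=; rewrite ?pc1 // pcM IH; case: b; rewrite ?pc_pA ?pc_pB. Qed.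

Lemma odd_evalp w : odd_perm (evalp w) = false.
Proof. by elim: w => [|b w IH] /=; rewrite ?odd_perm1 // odd_permM IH; case: b; rewrite ?odd_pA ?odd_pB. Qed.

Definition wstep (W : seq (seq bool)) : seq (seq bool) :=
  foldl (fun acc w => if cevalp w \in map cevalp acc then acc else rcons acc w) W
        [seq b :: w | w <- W, b <- [:: true; false]].
Definition EW : seq (seq bool) := Eval vm_compute in iter 12 wstep [:: [::]].

Lemma EW_ok : (size EW == 60) && uniq (map cevalp EW).
Proof. by vm_compute. Qed.
Lemma allp_cover : all (fun q => (q \in map cevalp EW) ||
    (q \in map (fun w => comp (cevalp w) ctau) EW)) allp.
Proof. by vm_compute. Qed.
Lemma perm_enum (s : {perm 'I_5}) :
  exists2 w, w \in EW & (s = evalp w \/ s = evalp w * tau).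
Proof.
have H : (pc s \in map cevalp EW) || (pc s \in map (fun w => comp (cevalp w) ctau) EW)
  := allP allp_cover _ (pc_allp s).
case/orP: H => /mapP [w wE e].
  by exists w => //; left; apply: pc_inj; rewrite pc_evalp.
by exists w => //; right; apply: pc_inj; rewrite pcM pc_evalp pc_tau.
Qed.

Lemma perm_even (s : {perm 'I_5}) : ~~ odd_perm s ->
  exists2 w, w \in EW & s = evalp w.
Proof.
case: (perm_enum s) => w wE [->|->]; first by exists w.
by rewrite odd_permM odd_evalp odd_tau.
Qed.


Notation gT := ({perm 'I_5} * bool)%type.

Lemma gmulE (x y : gT) : x * y = (x.1 * y.1, x.2 * y.2).
Proof. by []. Qed.
Lemma g1E : (1 : gT) = (1, 1). Proof. by []. Qed.
Lemma b1E : (1 : bool) = false. Proof. by []. Qed.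
Lemma bmulE (a b : bool) : a * b = addb a b. Proof. by []. Qed.

Lemma inG (x : gT) : (x \in A5xC2) = ~~ odd_perm x.1.
Proof. by case: x => x1 x2; rewrite /A5xC2 /= in_setX Alt_even in_setT andbT. Qed.

Definition cg : gT := (pA, false).
Definition dg : gT := (pB, false).
Definition zg : gT := (1, true).

Definition gevalw (w : seq bool) : gT := foldr (fun b acc => (if b then cg else dg) * acc) 1 w.

Lemma gevalwE w : gevalw w = (evalp w, false).
Proof. by elim: w => [|b w IH] //=; rewrite IH gmulE; case: b. Qed.

Lemma G_words x : x \in A5xC2 -> exists w, x = gevalw w * (if x.2 then zg else 1).
Proof.
rewrite inG => /perm_even [w _ e]; exists w; rewrite gevalwE gmulE.
by case: x e => [x1 []] /= ->; rewrite mulg1.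
Qed.

Definition cent_ok : bool :=
  all (fun q => (comp cA q == comp q cA) && (comp cB q == comp q cB) ==> (q == cid)) allp.
Lemma cent_okE : cent_ok. Proof. by vm_compute. Qed.

Lemma cent_triv s : pA * s = s * pA -> pB * s = s * pB -> s = 1.
Proof.
move=> e1 e2; apply: pc_inj; rewrite pc1.
have := allP cent_okE _ (pc_allp s).
by rewrite -pc_pA -pc_pB -!pcM e1 e2 !eqxx => /eqP.
Qed.

Definition fpsi (s : {perm 'I_5}) (x : gT) : gT :=
  if x \in A5xC2 then (x.1 ^ s, x.2) else x.

Lemma fpsi_inj s : injective (fpsi s).
Proof.
move=> [x1 x2] [y1 y2]; rewrite /fpsi !inG /=.
case: ifP => hx; case: ifP => hy //.
- by case=> /conjg_inj -> ->.
- by case=> e _; move: hy; rewrite -e odd_permJ hx.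
- by case=> e _; move: hx; rewrite e odd_permJ hy.
Qed.

Definition psi (s : {perm 'I_5}) : {perm gT} := perm (@fpsi_inj s).

Lemma psiE s x : psi s x = fpsi s x. Proof. by rewrite permE. Qed.

Lemma psiG s x : x \in A5xC2 -> psi s x \in A5xC2.
Proof. by rewrite psiE /fpsi => hx; rewrite hx !inG /= odd_permJ -inG. Qed.

Lemma psiM s t : psi (s * t) = psi s * psi t.
Proof.
apply/permP => x; rewrite permM !psiE /fpsi.
case: ifP => hx; last by rewrite hx.
by rewrite inG /= odd_permJ -inG hx conjgM.
Qed.

Lemma psi_Aut s : psi s \in Aut A5xC2.
Proof.
rewrite inE; apply/andP; split.
  by apply/subsetP => x; rewrite inE psiE /fpsi; apply: contraR => /negbTE ->; rewrite eqxx.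
apply/morphicP => x y hx hy; rewrite !psiE /fpsi groupM // hx hy.
by rewrite gmulE conjMg.
Qed.

Lemma psi_inj s : psi s = 1 -> s = 1.
Proof.
move=> e.
have hA : psi s cg = cg by rewrite e perm1.
have hB : psi s dg = dg by rewrite e perm1.
have gA : cg \in A5xC2 by rewrite inG /= odd_pA.
have gB : dg \in A5xC2 by rewrite inG /= odd_pB.
move: hA hB; rewrite !psiE /fpsi gA gB /= => -[hA] [hB].
have cc : forall a : {perm 'I_5}, a ^ s = a -> a * s = s * a.
  by move=> a ea; rewrite -{2}ea conjgE !mulgA mulgV mul1g.
by apply: cent_triv; apply: cc.
Qed.

Definition psim := @Morphism _ _ [set: {perm 'I_5}] psi (in2W psiM).

Lemma injm_psi : 'injm psim.
Proof.
apply/subsetP => s; rewrite !inE /= => /eqP hs.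
by rewrite (psi_inj hs) ?inE.
Qed.

Lemma conj_aut_psi x : x \in A5xC2 -> conj_aut A5xC2 x = psi x.1.
Proof.
move=> hx; apply: (eq_Aut _ (psi_Aut _)); first by rewrite /conj_aut; apply: Aut_aut.
move=> y hy; rewrite conj_autE // psiE /fpsi hy.
by case: x hx y hy => x1 x2 hx [y1 y2] hy /=; clear hx hy; case: x2; case: y2.
Qed.

Lemma Inn_psi : Inn A5xC2 = psim @* Alt 'I_5.
Proof.
rewrite /Inn morphimEsub ?normG // morphimEsub ?subsetT //.
apply/setP => a; apply/imsetP/imsetP => [[x hx ->]|[s hs ->]].
  by exists x.1; [rewrite Alt_even -inG | exact: conj_aut_psi].
have hx : (s, false) \in A5xC2 by rewrite inG /= -Alt_even.
by exists (s, false) => //; symmetry; exact: conj_aut_psi.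
Qed.

Definition gc (x : gT) : seq nat * bool := (pc x.1, x.2).
Definition gcomp (a b : seq nat * bool) := (comp a.1 b.1, addb a.2 b.2).
Definition gcid : seq nat * bool := (cid, false).

Lemma gcM x y : gc (x * y) = gcomp (gc x) (gc y).
Proof. by rewrite /gc /= pcM. Qed.
Lemma gc1 : gc 1 = gcid. Proof. by rewrite /gc /= pc1. Qed.
Lemma gc_inj : injective gc.
Proof.
move=> [x1 x2] [y1 y2] e; have e1 : pc x1 = pc y1 := congr1 fst e.
have e2 : x2 = y2 := congr1 snd e. by rewrite (pc_inj e1) e2.
Qed.

Definition allg : seq (seq nat * bool) := [seq (q, e) | q <- allp, e <- [:: true; false]].
Lemma gc_allg x : gc x \in allg.
Proof. by rewrite /gc; apply: allpairs_f; [apply: pc_allp | case: x.2]. Qed.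

Definition c3 a := (gcomp a (gcomp a a) == gcid) && (a != gcid).
Definition c5 a := (gcomp a (gcomp a (gcomp a (gcomp a a))) == gcid) && (a != gcid).
Definition c2 a := (gcomp a a == gcid) && (a != gcid).
Definition Sdef := [seq p <- [seq (a, b) | a <- [seq a <- allg | c3 a], b <- [seq b <- allg | c5 b]]
                   | c2 (gcomp p.1 p.2)].
Definition Slit := Eval vm_compute in Sdef.
Lemma Slit_size : size Slit = 120. Proof. by vm_compute. Qed.
Lemma SlitE : Sdef = Slit. Proof. vm_compute. reflexivity. Qed.

Lemma mem_Slit a b : a \in allg -> b \in allg -> c3 a -> c5 b -> c2 (gcomp a b) -> (a, b) \in Slit.
Proof.
move=> ha hb h3 h5 h2; rewrite -SlitE mem_filter; apply/andP; split; first exact: h2.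
by apply: (@allpairs_f _ _ _ pair); rewrite mem_filter ?ha ?hb ?h3 ?h5.
Qed.

Lemma gcg : gc cg = (cA, false). Proof. by rewrite /gc /= pc_pA. Qed.
Lemma gdg : gc dg = (cB, false). Proof. by rewrite /gc /= pc_pB. Qed.

Lemma cg3 : cg * (cg * cg) = 1.
Proof. by apply: gc_inj; rewrite !gcM gcg gc1; vm_compute. Qed.
Lemma dg5 : dg * (dg * (dg * (dg * dg))) = 1.
Proof. by apply: gc_inj; rewrite !gcM gdg gc1; vm_compute. Qed.
Lemma cdg2 : (cg * dg) * (cg * dg) = 1.
Proof. by apply: gc_inj; rewrite !gcM gcg gdg gc1; vm_compute. Qed.
Lemma cg1 : cg != 1.
Proof. by apply/eqP => /(congr1 gc); rewrite gcg gc1; vm_compute. Qed.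
Lemma dg1 : dg != 1.
Proof. by apply/eqP => /(congr1 gc); rewrite gdg gc1; vm_compute. Qed.
Lemma cdg1 : cg * dg != 1.
Proof. by apply/eqP => /(congr1 gc); rewrite gcM gcg gdg gc1; vm_compute. Qed.
Lemma cgG : cg \in A5xC2. Proof. by rewrite inG /= odd_pA. Qed.
Lemma dgG : dg \in A5xC2. Proof. by rewrite inG /= odd_pB. Qed.
Lemma zgG : zg \in A5xC2. Proof. by rewrite inG /= odd_perm1. Qed.

Section AutFacts.
Variable f : {perm gT}.
Hypothesis hf : f \in Aut A5xC2.

Lemma aut_morph : {in A5xC2 &, {morph f : x y / x * y}}.
Proof. exact/morphicP/(Aut_morphic hf). Qed.

Lemma aut1 : f 1 = 1.
Proof. by apply: (mulgI (f 1)); rewrite -aut_morph ?group1 // !mulg1. Qed.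

Lemma aut_im : f @: A5xC2 = A5xC2.
Proof. by apply: im_perm_on; move: hf; rewrite inE => /andP []. Qed.

Lemma autG x : x \in A5xC2 -> f x \in A5xC2.
Proof. by move=> hx; rewrite -aut_im; apply: imset_f. Qed.

Lemma aut_neq1 x : x != 1 -> f x != 1.
Proof. by apply: contra => /eqP e; apply/eqP; apply: (@perm_inj _ f); rewrite e aut1. Qed.

Lemma aut_z : f zg = zg.
Proof.
have comm : forall u, u \in A5xC2 -> f zg * f u = f u * f zg.
  move=> u hu; rewrite -!aut_morph ?zgG //; congr (f _).
  by rewrite !gmulE /= mulg1 mul1g !bmulE addbC.
have pre : forall v, v \in A5xC2 -> exists2 u, u \in A5xC2 & v = f u.
  by move=> v; rewrite -{1}aut_im => /imsetP [u hu ->]; exists u.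
have [u hu eu] := pre _ cgG; have [u' hu' eu'] := pre _ dgG.
have e1 := comm _ hu; have e2 := comm _ hu'.
rewrite -eu in e1; rewrite -eu' in e2.
have h1 : (f zg).1 = 1.
  apply: cent_triv; [exact: (esym (congr1 fst e1)) | exact: (esym (congr1 fst e2))].
have hz1 : zg != 1 by apply/eqP => e; have := congr1 snd e.
have hz : f zg != 1 by apply: aut_neq1.
move: hz h1; case: (f zg) => [y1 y2] /= hz h1; subst y1.
by case: y2 hz => // /eqP h; exfalso; apply: h.
Qed.
End AutFacts.

Lemma gevalwG w : gevalw w \in A5xC2.
Proof. by elim: w => [|b w IH] /=; rewrite ?group1 // groupM //; case: b; rewrite ?cgG ?dgG. Qed.

Lemma aut_det f g : f \in Aut A5xC2 -> g \in Aut A5xC2 ->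
  f cg = g cg -> f dg = g dg -> f = g.
Proof.
move=> hf hg ec ed; apply: (eq_Aut hf hg) => x /G_words [w ->].
have ew : f (gevalw w) = g (gevalw w).
  elim: w => [|b w IH] /=; first by rewrite (aut1 hf) (aut1 hg).
  rewrite (aut_morph hf) ?gevalwG ?(aut_morph hg) ?gevalwG ?IH //;
    by case: b; rewrite ?ec ?ed ?cgG ?dgG.
rewrite (aut_morph hf) ?(aut_morph hg) ?gevalwG ?ew //;
  by case: x.2; rewrite ?zgG ?group1 ?(aut_z hf) ?(aut_z hg) ?(aut1 hf) ?(aut1 hg).
Qed.

Lemma card_Aut_le : #|Aut A5xC2| <= 120.
Proof.
rewrite -Slit_size cardE.
pose F (f : {perm gT}) := (gc (f cg), gc (f dg)).
rewrite -(size_map F); apply: uniq_leq_size.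
  rewrite map_inj_in_uniq ?enum_uniq // => f g; rewrite !mem_enum => hf hg e.
  have e1 : gc (f cg) = gc (g cg) := congr1 fst e.
  have e2 : gc (f dg) = gc (g dg) := congr1 snd e.
  by apply: aut_det => //; apply: gc_inj.
move=> p /mapP [f]; rewrite mem_enum => hf ->.
have M := aut_morph hf.
apply: mem_Slit; rewrite ?gc_allg //.
- rewrite /c3 -!gcM -!M ?groupM ?cgG // cg3 (aut1 hf) gc1 eqxx /=.
  by rewrite -gc1 (inj_eq gc_inj) aut_neq1 // cg1.
- rewrite /c5 -!gcM -!M ?groupM ?dgG // dg5 (aut1 hf) gc1 eqxx /=.
  by rewrite -gc1 (inj_eq gc_inj) aut_neq1 // dg1.
- rewrite /c2 -!gcM -!M ?groupM ?cgG ?dgG // cdg2 (aut1 hf) gc1 eqxx /=.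
  by rewrite -gc1 (inj_eq gc_inj) aut_neq1 // cdg1.
Qed.

Lemma card_Sym5 : #|Sym 'I_5| = 120.
Proof. by rewrite card_Sym card_ord. Qed.

Lemma Aut_psi : Aut A5xC2 = psim @* Sym 'I_5.
Proof.
apply/eqP; rewrite eq_sym eqEcard; apply/andP; split.
  by apply/subsetP => a /morphimP [s _ _ ->]; apply: psi_Aut.
by rewrite card_injm ?injm_psi ?subsetT // card_Sym5 card_Aut_le.
Qed.


Definition P2 : seq (seq nat) :=
  Eval vm_compute in [seq [:: i; j] | i <- iota 0 5, j <- [seq j <- iota 0 5 | i < j]].

Definition dec (p : seq nat) : {set 'I_5} := [set i : 'I_5 | val i \in p].
Definition sc (v : {set 'I_5}) : seq nat := [seq n <- iota 0 5 | inord n \in v].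

Lemma in_dec i p : (i \in dec p) = (val i \in p). Proof. by rewrite inE. Qed.

Lemma mem_sc n v : (n \in sc v) = (n < 5) && (inord n \in v).
Proof. by rewrite mem_filter mem_iota /= add0n andbC. Qed.

Lemma dec_sc v : dec (sc v) = v.
Proof. by apply/setP => i; rewrite in_dec mem_sc ltn_ord inord_val. Qed.

Lemma sc_inj : injective sc.
Proof. by move=> v w e; rewrite -(dec_sc v) e dec_sc. Qed.

Lemma sc_dec_all : all (fun p => [seq n <- iota 0 5 | n \in p] == p) P2.
Proof. by vm_compute. Qed.

Lemma sc_dec p : p \in P2 -> sc (dec p) = p.
Proof.
move=> hp; have /eqP {2}<- := allP sc_dec_all _ hp.
apply: eq_in_filter => n; rewrite mem_iota /= add0n => hn.
by rewrite in_dec vinord.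
Qed.

Lemma sc_mapE v : sc v = map val (enum v).
Proof.
rewrite /sc -val_enum_ord filter_map /enum_mem; congr map.
rewrite -filter_predI; apply: eq_filter => i /=; by rewrite inord_val ?andbT.
Qed.

Lemma size_sc v : size (sc v) = #|v|.
Proof. by rewrite sc_mapE size_map cardE. Qed.

Lemma P2_mem a b : a < b -> b < 5 -> [:: a; b] \in P2.
Proof.
by case: b => [|[|[|[|[|b]]]]] //; case: a => [|[|[|[|[|a]]]]].
Qed.

Lemma sc_P2 (v : {set 'I_5}) : #|v| = 2 -> sc v \in P2.
Proof.
move=> h2; have hs : size (sc v) = 2 by rewrite size_sc.
have so : sorted ltn (sc v) by apply: sorted_filter; [apply: ltn_trans | apply: iota_ltn_sorted].
have hb : forall n, n \in sc v -> n < 5 by move=> n; rewrite mem_sc => /andP [].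
move: hs so hb; case: (sc v) => [|a [|b [|c l]]] //= _.
rewrite andbT => ab hb; apply: P2_mem => //; apply: hb.
by rewrite !inE eqxx orbT.
Qed.


Definition t0 : 'I_4 := @Ordinal 4 0 isT.
Definition t1 : 'I_4 := @Ordinal 4 1 isT.
Definition t2 : 'I_4 := @Ordinal 4 2 isT.
Definition t3 : 'I_4 := @Ordinal 4 3 isT.

Notation S x := (val (x : HDX)).2.

Variant hd_spec (x : HDX) : Prop :=
 | HdV (v : {set 'I_5}) of hd_type x = t0 & #|v| = 2 & S x = [set v]
 | HdE (v w : {set 'I_5}) of hd_type x = t1 & #|v| = 2 & #|w| = 2 & [disjoint v & w] & S x = [set v; w]
 | HdF (s : {perm 'I_5}) of hd_type x = t2 & ~~ odd_perm s & S x = pentagon s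
 | HdP (s : {perm 'I_5}) of hd_type x = t3 & odd_perm s & S x = pentagon s.

Lemma hdP x : hd_spec x.
Proof.
case: x => [[[[|[|[|[|i]]]] hi] A]] //= wf.
- have H := wf; case/existsP: H => [v /andP [/eqP hv /eqP hA]]; by apply: (@HdV _ v) => //; apply/val_inj.
- have H := wf; case/existsP: H => [v /existsP [w /and4P [/eqP hv /eqP hw hd /eqP hA]]].
  by apply: (@HdE _ v w) => //; apply/val_inj.
- have H := wf; case/existsP: H => [s /andP [hs /eqP hA]]; by apply: (@HdF _ s) => //; apply/val_inj.
- have H := wf; case/existsP: H => [s /andP [hs /eqP hA]]; by apply: (@HdP _ s) => //; apply/val_inj.
Qed.

Lemma neq_ordS (k : 'I_5) : k != ordS k.
Proof. by case: k => [[|[|[|[|[|?]]]]] ?]. Qed.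

Lemma pent_card (s : {perm 'I_5}) k : #|[set s k; s (ordS k)]| = 2.
Proof. by rewrite cards2 (inj_eq perm_inj) neq_ordS. Qed.

Lemma S_2sets x u : u \in S x -> #|u| = 2.
Proof.
case: (hdP x) => [v _ hv ->|v w _ hv hw _ ->|s _ _ ->|s _ _ ->].
- by move/set1P ->.
- by case/set2P => ->.
- by case/imsetP => k _ ->; apply: pent_card.
- by case/imsetP => k _ ->; apply: pent_card.
Qed.

Definition i5 (n : nat) : 'I_5 := inord n.

Lemma pent_two (s : {perm 'I_5}) : exists a b,
  [/\ a \in pentagon s, b \in pentagon s & a != b].
Proof.
exists [set s (i5 0); s (ordS (i5 0))], [set s (i5 1); s (ordS (i5 1))].
split; [by rewrite /pentagon; apply: imset_f | by rewrite /pentagon; apply: imset_f | ]; apply/eqP => /setP /(_ (s (i5 0))).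
rewrite !inE eqxx /= !(inj_eq perm_inj).
by rewrite -!(inj_eq val_inj) /= /i5 !vinord.
Qed.

Lemma S_two x : hd_type x != t0 -> exists a b, [/\ a \in S x, b \in S x & a != b].
Proof.
case: (hdP x) => [v -> //|v w _ hv hw hd ->|s _ _ ->|s _ _ ->] _; try exact: pent_two.
exists v, w; split; rewrite ?inE ?eqxx ?orbT //.
apply/eqP => e; move: hd; rewrite e => /disjoint_setI0; rewrite setIid => w0.
by move: hw; rewrite w0 cards0.
Qed.

Lemma share_edgeC A B : share_edge A B = share_edge B A.
Proof.
rewrite /share_edge; apply/existsP/existsP => [] [v /existsP [w /and5P [a b c d e]]];
  by exists v; apply/existsP; exists w; rewrite a b c d e.
Qed.

Lemma hd_incC x y : hd_inc x y = hd_inc y x.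
Proof.
rewrite /hd_inc eq_sym; congr andb.
by rewrite [X in if X then _ else _]andbC share_edgeC orbC.
Qed.

Lemma incV x y v : hd_type x = t0 -> S x = [set v] -> hd_type y != t0 ->
  hd_inc x y = (v \in S y).
Proof.
move=> tx sx ty; rewrite /hd_inc tx eq_sym ty /= sx sub1set.
case: (v \in S y) => //=; apply/negP => /subsetP sub.
have [a [b [ha hb ab]]] := S_two ty.
by move: ab; rewrite (set1P (sub _ ha)) (set1P (sub _ hb)) eqxx.
Qed.

Definition xs (A : {set {set 'I_5}}) : seq (seq nat) := [seq p <- P2 | dec p \in A].
Definition xcode (x : HDX) : nat * seq (seq nat) := (val (hd_type x), xs (S x)).

Lemma P2_size2 : all (fun p => size p == 2) P2. Proof. by vm_compute. Qed.
Lemma P2_uniq : uniq P2. Proof. by vm_compute. Qed.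

Lemma dec_card p : p \in P2 -> #|dec p| = 2.
Proof. by move=> hp; rewrite -size_sc sc_dec //; apply/eqP; apply: (allP P2_size2). Qed.

Lemma dec_eq p (v : {set 'I_5}) : p \in P2 -> (dec p == v) = (p == sc v).
Proof.
move=> hp; apply/eqP/eqP => [<-|->]; by rewrite ?sc_dec ?dec_sc.
Qed.

Lemma xs_inj (A B : {set {set 'I_5}}) : (forall u, u \in A -> #|u| = 2) -> (forall u, u \in B -> #|u| = 2) ->
  xs A = xs B -> A = B.
Proof.
have H : forall A B : {set {set 'I_5}}, (forall u, u \in A -> #|u| = 2) -> xs A = xs B -> A \subset B.
  move=> A' B' hA e; apply/subsetP => u hu.
  have hp : sc u \in xs A' by rewrite mem_filter dec_sc hu sc_P2 ?hA.
  by rewrite e mem_filter dec_sc in hp; case/andP: hp.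
by move=> hA hB e; apply/eqP; rewrite eqEsubset !H.
Qed.

Lemma xcode_inj : injective xcode.
Proof.
move=> x y e.
have e1 : val (hd_type x) = val (hd_type y) := congr1 fst e.
have e2 : xs (S x) = xs (S y) := congr1 snd e.
apply: val_inj; move: e1 (xs_inj (@S_2sets x) (@S_2sets y) e2).
rewrite /hd_type; case: (val x) => [i A]; case: (val y) => [j B] /= /val_inj -> -> //.
Qed.

Lemma xs1 (v : {set 'I_5}) : #|v| = 2 -> xs [set v] = [:: sc v].
Proof.
move=> hv; rewrite /xs (eq_in_filter (a2 := pred1 (sc v))).
  by rewrite filter_pred1_uniq ?P2_uniq ?sc_P2.
by move=> p hp; rewrite inE /= dec_eq.
Qed.

Lemma xs2 (v w : {set 'I_5}) : #|v| = 2 -> #|w| = 2 ->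
  xs [set v; w] = [seq p <- P2 | (p == sc v) || (p == sc w)].
Proof.
move=> hv hw; rewrite /xs; apply: eq_in_filter => p hp.
by rewrite !inE !dec_eq.
Qed.

Definition pentc (c : seq nat) (p : seq nat) : bool :=
  has (fun k => (nth 0 c k \in p) && (nth 0 c (k.+1 %% 5) \in p)) (iota 0 5).

Lemma pair_eq (u : {set 'I_5}) a b : #|u| = 2 -> a != b ->
  (u == [set a; b]) = (a \in u) && (b \in u).
Proof.
move=> hu ab; apply/eqP/andP => [->|[ha hb]]; first by rewrite !inE !eqxx orbT.
apply/eqP; rewrite eq_sym eqEcard hu cards2 ab leqnn andbT.
by apply/subsetP => x; rewrite !inE => /orP [] /eqP ->.
Qed.

Lemma xsP s : xs (pentagon s) = [seq p <- P2 | pentc (pc s) p].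
Proof.
apply: eq_in_filter => p hp; rewrite /pentc -val_enum_ord has_map.
apply/imsetP/hasP => [[k _ ek]|[k _ /= /andP [h1 h2]]].
  exists k; first by rewrite mem_enum.
  rewrite /= !nth_pc ?ltn_ord ?ltn_pmod // -!in_dec.
  have -> : (inord k : 'I_5) = k by rewrite inord_val.
  have -> : (inord (k.+1 %% 5) : 'I_5) = ordS k by apply: val_inj; rewrite vinord ?ltn_pmod.
  by rewrite ek !inE !eqxx orbT.
exists k => //; apply/eqP; rewrite pair_eq ?dec_card ?(inj_eq perm_inj) ?neq_ordS //.
rewrite !in_dec; rewrite !nth_pc ?ltn_ord ?ltn_pmod // in h1 h2.
have e : (inord (k.+1 %% 5) : 'I_5) = ordS k by apply: val_inj; rewrite vinord ?ltn_pmod.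
by rewrite inord_val e in h1 h2; rewrite h1 h2.
Qed.


Definition cls (i : 'I_4) : {set HDX} := [set x : HDX | hd_type x == i].

Definition v01 : {set 'I_5} := [set i5 0; i5 1].
Lemma v01_card : #|v01| = 2.
Proof. by rewrite cards2 -(inj_eq val_inj) /i5 !vinord. Qed.
Lemma xdef_wf : hd_wf (t0, [set v01]).
Proof. by apply/existsP; exists v01; rewrite /pvertex v01_card !eqxx. Qed.
Definition xdef : HDX := Sub (t0, [set v01]) xdef_wf.

Definition mkV (v : {set 'I_5}) : HDX := insubd xdef (t0, [set v]).
Definition mkE (v w : {set 'I_5}) : HDX := insubd xdef (t1, [set v; w]).

Lemma mkV_wf (v : {set 'I_5}) : #|v| = 2 -> hd_wf (t0, [set v]).
Proof. by move=> hv; apply/existsP; exists v; rewrite /pvertex hv !eqxx. Qed.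
Lemma mkE_wf (v w : {set 'I_5}) : #|v| = 2 -> #|w| = 2 -> [disjoint v & w] -> hd_wf (t1, [set v; w]).
Proof.
move=> hv hw hd; apply/existsP; exists v; apply/existsP; exists w.
by rewrite /pvertex hv hw hd !eqxx.
Qed.
Lemma mkV_val (v : {set 'I_5}) : #|v| = 2 -> val (mkV v) = (t0, [set v]).
Proof. by move=> hv; rewrite /mkV insubdK //; apply: mkV_wf. Qed.

Lemma mkE_val (v w : {set 'I_5}) : #|v| = 2 -> #|w| = 2 -> [disjoint v & w] -> val (mkE v w) = (t1, [set v; w]).
Proof. by move=> hv hw hd; rewrite /mkE insubdK //; apply: mkE_wf. Qed.

Definition disjc (a b : seq nat) : bool := all (fun n => n \notin b) a.

Lemma P2_lt5 : all (all (fun n => n < 5)) P2. Proof. by vm_compute. Qed.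

Lemma disj_dec a b : a \in P2 -> [disjoint dec a & dec b] = disjc a b.
Proof.
move=> ha; rewrite disjoint_subset; apply/subsetP/allP => [H n hn|H x].
  have h5 : n < 5 := allP (allP P2_lt5 _ ha) _ hn.
  have := H (inord n); rewrite !inE vinord //; by move/(_ hn).
by rewrite !inE => /H.
Qed.

Lemma disj_sc (v w : {set 'I_5}) : #|v| = 2 -> [disjoint v & w] = disjc (sc v) (sc w).
Proof. by move=> hv; rewrite -disj_dec ?sc_P2 // !dec_sc. Qed.

Definition CL0 := [seq (0, [:: p]) | p <- P2].
Definition CL2 := [seq (2, [seq p <- P2 | pentc (cevalp w) p]) | w <- EW].
Definition CL3 := [seq (3, [seq p <- P2 | pentc (comp (cevalp w) ctau) p]) | w <- EW].

Lemma CL0_size : size (undup CL0) = 10. Proof. by vm_compute. Qed.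
Lemma CL2_size : size (undup CL2) = 6. Proof. by vm_compute. Qed.
Lemma CL3_size : size (undup CL3) = 6. Proof. by vm_compute. Qed.

Lemma cls_le i (CL : seq (nat * seq (seq nat))) :
  (forall x, hd_type x = i -> xcode x \in CL) -> #|cls i| <= size (undup CL).
Proof.
move=> H; rewrite cardE -(size_map xcode); apply: uniq_leq_size.
  by rewrite map_inj_uniq ?enum_uniq //; apply: xcode_inj.
move=> c /mapP [x]; rewrite mem_enum inE => /eqP /H hx ->.
by rewrite mem_undup.
Qed.

Lemma cls0_le : #|cls t0| <= 10.
Proof.
rewrite -CL0_size; apply: cls_le => x tx; case: (hdP x); rewrite tx // => v _ hv hS.
rewrite /xcode hS xs1 // tx; apply: (map_f (fun p => (0, [:: p]))); exact: sc_P2.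
Qed.

Lemma cls2_le : #|cls t2| <= 6.
Proof.
rewrite -CL2_size; apply: cls_le => x tx; case: (hdP x); rewrite tx // => s _ hs hS.
have [w hw es] := perm_even hs.
rewrite /xcode hS xsP tx es pc_evalp.
by apply: (map_f (fun w => (2, [seq p <- P2 | pentc (cevalp w) p]))).
Qed.

Lemma cls3_le : #|cls t3| <= 6.
Proof.
rewrite -CL3_size; apply: cls_le => x tx; case: (hdP x); rewrite tx // => s _ hs hS.
have [w hw [es|es]] := perm_enum s; first by move: hs; rewrite es odd_evalp.
rewrite /xcode hS xsP tx es pcM pc_evalp pc_tau.
by apply: (map_f (fun w => (3, [seq p <- P2 | pentc (comp (cevalp w) ctau) p]))).
Qed.

Lemma cls_ge i (L : seq HDX) : uniq L -> (forall x, x \in L -> hd_type x = i) ->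
  size L <= #|cls i|.
Proof.
move=> uL H; rewrite cardE; apply: uniq_leq_size => // x hx.
by rewrite mem_enum inE H.
Qed.

Lemma CL0_uniq : uniq CL0. Proof. by vm_compute. Qed.

Lemma cls0_ge : 10 <= #|cls t0|.
Proof.
have -> : 10 = size [seq mkV (dec p) | p <- P2] by rewrite size_map.
apply: cls_ge => [|x /mapP [p hp ->]]; last by rewrite /hd_type mkV_val ?dec_card.
apply: (@map_uniq _ _ xcode); rewrite -map_comp.
have -> : [seq (xcode \o (fun p => mkV (dec p))) i | i <- P2] = CL0.
  apply/eq_in_map => p hp /=; rewrite /xcode /hd_type mkV_val ?dec_card //=.
  by rewrite xs1 ?dec_card // sc_dec.
exact: CL0_uniq.
Qed.

Definition EP : seq (seq nat * seq nat)%type := Eval vm_compute in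
  [seq (a, b) | a <- P2, b <- [seq b <- P2 | disjc a b && (index a P2 < index b P2)]].
Lemma EP_ok : all (fun ab => (ab.1 \in P2) && (ab.2 \in P2) && disjc ab.1 ab.2) EP.
Proof. by vm_compute. Qed.
Lemma EP_uniq : uniq [seq (1%N, [seq p <- P2 | (p == ab.1) || (p == ab.2)]) | ab <- EP].
Proof. by vm_compute. Qed.
Lemma EP_size : size EP = 15. Proof. by vm_compute. Qed.

Lemma cls1_ge : 15 <= #|cls t1|.
Proof.
have EPok : forall ab, ab \in EP -> [/\ ab.1 \in P2, ab.2 \in P2 & disjc ab.1 ab.2].
  by move=> ab hab; have /andP [/andP [? ?] ?] := allP EP_ok _ hab.
have -> : 15 = size [seq mkE (dec ab.1) (dec ab.2) | ab <- EP] by rewrite size_map EP_size.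
apply: cls_ge => [|x /mapP [ab hab ->]]; last first.
  have [h1 h2 h3] := EPok _ hab.
  by rewrite /hd_type mkE_val ?dec_card ?disj_dec.
apply: (@map_uniq _ _ xcode); rewrite -map_comp.
have -> : [seq (xcode \o (fun ab => mkE (dec ab.1) (dec ab.2))) i | i <- EP] =
          [seq (1%N, [seq p <- P2 | (p == ab.1) || (p == ab.2)]) | ab <- EP].
  apply/eq_in_map => ab hab /=; have [h1 h2 h3] := EPok _ hab.
  rewrite /xcode /hd_type mkE_val ?dec_card ?disj_dec //=.
  by rewrite xs2 ?dec_card // !sc_dec.
exact: EP_uniq.
Qed.


Definition Lc : seq (seq nat) := [:: [:: 0; 1]; [:: 2; 3]; [:: 2; 4]; [:: 0; 4]]%N.
Definition cpat (q : seq nat) := [seq (q == p) || disjc q p | p <- Lc].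
Lemma resolve_ok : all (fun q1 => all (fun q2 => (cpat q1 == cpat q2) ==> (q1 == q2)) P2) P2.
Proof. by vm_compute. Qed.

Definition PP := [seq [:: a; b] | a <- P2, b <- P2].
Definition T4 := [seq x ++ y | x <- PP, y <- PP].
Definition pat4 (t : seq (seq nat)) : bool :=
  all (fun ij => ((nth [::] t ij.1 == nth [::] t ij.2) == (nth [::] Lc ij.1 == nth [::] Lc ij.2))
              && (disjc (nth [::] t ij.1) (nth [::] t ij.2) == disjc (nth [::] Lc ij.1) (nth [::] Lc ij.2)))
      [seq (i, j) | i <- iota 0 4, j <- iota 0 4].
Definition Tlist := [seq t <- T4 | pat4 t].
Lemma Tlist_size : size Tlist = 120. Proof. by vm_compute. Qed.

Notation corr := (correlation hd_type hd_inc).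

Section Corr.
Variable a : {perm HDX}.
Hypothesis ha : corr a.

Lemma corrT x y : (hd_type (a x) == hd_type (a y)) = (hd_type x == hd_type y).
Proof. by have /andP [/eqP -> _] := forallP (forallP ha x) y. Qed.

Lemma corrI x y : hd_inc (a x) (a y) = hd_inc x y.
Proof. by have /andP [_ /eqP ->] := forallP (forallP ha x) y. Qed.

Lemma corrV : corr a^-1.
Proof.
apply/forallP => x; apply/forallP => y.
have := corrT (a^-1 x) (a^-1 y); have := corrI (a^-1 x) (a^-1 y).
by rewrite !permKV => -> ->; rewrite !eqxx.
Qed.
End Corr.

Lemma corrM a b : corr a -> corr b -> corr (a * b).
Proof.
move=> ha hb; apply/forallP => x; apply/forallP => y.
by rewrite !permM !corrT // !corrI // !eqxx.
Qed.

Lemma corr1 : corr 1.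
Proof. by apply/forallP => x; apply/forallP => y; rewrite !perm1 !eqxx. Qed.

Lemma cls_img a x0 : corr a -> a @: cls (hd_type x0) = cls (hd_type (a x0)).
Proof.
move=> ha; apply/setP => y; rewrite inE; apply/imsetP/idP => [[x hx ->]|hy].
  by rewrite inE in hx; rewrite corrT.
exists (a^-1 y); last by rewrite permKV.
by rewrite inE -(corrT ha) permKV.
Qed.

Lemma cls_card a x0 : corr a -> #|cls (hd_type (a x0))| = #|cls (hd_type x0)|.
Proof. by move=> ha; rewrite -(cls_img x0 ha) card_imset //; apply: perm_inj. Qed.

Lemma I4_cases (j : 'I_4) : [\/ j = t0, j = t1, j = t2 | j = t3].
Proof.
case: j => [[|[|[|[|?]]]] hj] //.
- by constructor 1; apply/val_inj.
- by constructor 2; apply/val_inj.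
- by constructor 3; apply/val_inj.
- by constructor 4; apply/val_inj.
Qed.

Lemma t1_ex : exists e : HDX, hd_type e = t1.
Proof.
have : 0 < #|cls t1| by apply: leq_trans cls1_ge.
by case/card_gt0P => e; rewrite inE => /eqP; exists e.
Qed.

Lemma t0_ex : exists e : HDX, hd_type e = t0.
Proof. by exists xdef. Qed.

Lemma corr_t0 a x : corr a -> hd_type x = t0 -> hd_type (a x) = t0.
Proof.
move=> ha tx; have := cls_card x ha; rewrite tx.
have h0 : #|cls t0| = 10 by apply/eqP; rewrite eqn_leq cls0_le cls0_ge.
case: (I4_cases (hd_type (a x))) => -> //; rewrite h0 => e.
- by move: cls1_ge; rewrite e.
- by move: cls2_le; rewrite e.
- by move: cls3_le; rewrite e.
Qed.

Lemma corr_t1 a x : corr a -> hd_type x = t1 -> hd_type (a x) = t1.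
Proof.
move=> ha tx; have := cls_card x ha; rewrite tx.
case: (I4_cases (hd_type (a x))) => e //.
- have hv : hd_type (a xdef) = t0 by apply: corr_t0.
  by move: (corrT ha x xdef); rewrite e hv tx eqxx.
- by rewrite e => e'; move: cls1_ge; rewrite -e' => /leq_trans /(_ cls2_le).
- by rewrite e => e'; move: cls1_ge; rewrite -e' => /leq_trans /(_ cls3_le).
Qed.

Lemma corr_ti a x i : corr a -> (i = t0 \/ i = t1) ->
  (hd_type (a x) == i) = (hd_type x == i).
Proof.
move=> ha hi.
have [w hw] : exists w : HDX, hd_type w = i by case: hi => ->; [exact: t0_ex | exact: t1_ex].
have hw' : hd_type (a w) = i by case: hi hw => -> hw; [apply: corr_t0 | apply: corr_t1].
by rewrite -{1}hw' -hw corrT.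
Qed.

Definition adj (x y : HDX) := [exists e, [&& hd_type e == t1, hd_inc x e & hd_inc y e]].

Lemma adj_corr a x y : corr a -> adj (a x) (a y) = adj x y.
Proof.
move=> ha; apply/existsP/existsP => [[e /and3P [h1 h2 h3]]|[e /and3P [h1 h2 h3]]].
  exists (a^-1 e); rewrite -(corr_ti _ ha); last by right.
  by rewrite -(corrI ha x) -(corrI ha y) permKV h1 h2 h3.
exists (a e); rewrite (corr_ti _ ha); last by right.
by rewrite !corrI // h1 h2 h3.
Qed.

Definition vc (x : HDX) := head [::] (xs (S x)).

Lemma valE (x : HDX) : val x = (hd_type x, S x).
Proof. by rewrite /hd_type; case: (val x). Qed.

Lemma vertP x : hd_type x = t0 -> exists2 v : {set 'I_5}, #|v| = 2 & S x = [set v].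
Proof. by case: (hdP x) => [v _ hv hS|v w ->|s ->|s ->] // _; exists v. Qed.

Lemma vcV x (v : {set 'I_5}) : S x = [set v] -> #|v| = 2 -> vc x = sc v.
Proof. by move=> hS hv; rewrite /vc hS xs1. Qed.

Lemma vc_P2 x : hd_type x = t0 -> vc x \in P2.
Proof. by case/vertP => v hv hS; rewrite (vcV hS hv) sc_P2. Qed.

Lemma vc_eq u w : hd_type u = t0 -> hd_type w = t0 -> (vc u == vc w) = (u == w).
Proof.
move=> tu tw; case/vertP: (tu) => v hv hu; case/vertP: (tw) => v' hv' hw.
rewrite (vcV hu hv) (vcV hw hv').
apply/eqP/eqP => [e0|e]; last first.
  subst w; rewrite hu in hw; congr sc; apply/set1P; rewrite -hw; exact: set11.
have e := sc_inj e0.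
by apply: val_inj; rewrite (valE u) (valE w) tu tw hu hw e.
Qed.
Lemma vc_disj u w : hd_type u = t0 -> hd_type w = t0 ->
  disjc (vc u) (vc w) = (u != w) && adj u w.
Proof.
move=> tu tw; case/vertP: (tu) => v hv hu; case/vertP: (tw) => v' hv' hw.
rewrite (vcV hu hv) (vcV hw hv') -disj_sc //.
have nt1 : t1 != t0 by [].
case: eqP => [e|ne] /=.
  subst w.
  have -> : v' = v by apply/set1P; rewrite -hu hw inE.
  apply/negP => /disjoint_setI0; rewrite setIid => v0.
  by move: hv; rewrite v0 cards0.
have vv : v != v'.
  by apply/eqP => e; apply: ne; apply: val_inj; rewrite (valE u) (valE w) tu tw hu hw e.
apply/idP/existsP => [hd|[e /and3P [/eqP te h1 h2]]].
  exists (mkE v v').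
  have te : hd_type (mkE v v') = t1 by rewrite /hd_type mkE_val.
  rewrite te eqxx /= (incV tu hu) ?te // (incV tw hw) ?te //.
  by rewrite mkE_val //= !inE !eqxx orbT.
rewrite (incV tu hu) ?te // in h1; rewrite (incV tw hw) ?te // in h2.
case: (hdP e) h1 h2; rewrite te // => a b _ _ _ hab -> .
rewrite !inE => /orP [] /eqP e1 /orP [] /eqP e2.
- by move: vv; rewrite e1 e2 eqxx.
- by rewrite e1 e2.
- by rewrite e1 e2 disjoint_sym.
- by move: vv; rewrite e1 e2 eqxx.
Qed.


Lemma xcode2 x : hd_type x = t2 -> xcode x \in CL2.
Proof.
move=> tx; case: (hdP x); rewrite tx // => s _ hs hS.
have [w hw es] := perm_even hs.
rewrite /xcode hS xsP tx es pc_evalp.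
by apply: (map_f (fun w => (2, [seq p <- P2 | pentc (cevalp w) p]))).
Qed.

Lemma xcode3 x : hd_type x = t3 -> xcode x \in CL3.
Proof.
move=> tx; case: (hdP x); rewrite tx // => s _ hs hS.
have [w hw [es|es]] := perm_enum s; first by move: hs; rewrite es odd_evalp.
rewrite /xcode hS xsP tx es pcM pc_evalp pc_tau.
by apply: (map_f (fun w => (3, [seq p <- P2 | pentc (comp (cevalp w) ctau) p]))).
Qed.

Lemma CL23 : all (fun a => all (fun b => a.2 != b.2) CL3) CL2.
Proof. by vm_compute. Qed.

Lemma no23 x y : hd_type x = t2 -> hd_type y = t3 -> S x <> S y.
Proof.
move=> tx ty e; have h2 := xcode2 tx; have h3 := xcode3 ty.
by move: (allP (allP CL23 _ h2) _ h3); rewrite /xcode /= e eqxx.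
Qed.

Definition Ls : seq HDX := [seq mkV (dec p) | p <- Lc].
Lemma Lc_P2 : all (fun p => p \in P2) Lc. Proof. by vm_compute. Qed.

Lemma Ls_t0 l : l \in Ls -> hd_type l = t0.
Proof. by case/mapP => p hp ->; rewrite /hd_type mkV_val // dec_card // (allP Lc_P2). Qed.

Lemma Ls_vc : map vc Ls = Lc.
Proof.
rewrite -map_comp -{2}(map_id Lc); apply/eq_in_map => p hp /=.
have h := allP Lc_P2 _ hp.
by rewrite (@vcV _ (dec p)) ?dec_card ?sc_dec // mkV_val ?dec_card.
Qed.

Lemma vpat c x : corr c -> (forall l, l \in Ls -> c l = l) -> hd_type x = t0 ->
  map (fun l => (x == l) || adj x l) Ls = map (fun l => (c x == l) || adj (c x) l) Ls.
Proof.
move=> hc hfix tx; apply/eq_in_map => l hl.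
by rewrite -{3 4}(hfix l hl) (inj_eq perm_inj) adj_corr.
Qed.

Lemma cpatE y : hd_type y = t0 -> cpat (vc y) = map (fun l => (y == l) || adj y l) Ls.
Proof.
move=> ty; rewrite /cpat -Ls_vc -map_comp; apply/eq_in_map => l hl /=.
have tl := Ls_t0 hl; rewrite vc_eq // vc_disj //.
by case: (y == l).
Qed.

Lemma rigid c : corr c -> (forall l, l \in Ls -> c l = l) -> c = 1.
Proof.
move=> hc hfix.
have fixV : forall x, hd_type x = t0 -> c x = x.
  move=> x tx; have tcx : hd_type (c x) = t0 by apply: corr_t0.
  have e : cpat (vc (c x)) = cpat (vc x) by rewrite !cpatE // (vpat hc hfix tx).
  have := allP (allP resolve_ok _ (vc_P2 tcx)) _ (vc_P2 tx).
  by rewrite e eqxx /= vc_eq // => /eqP.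
apply/permP => x; rewrite perm1.
case: (boolP (hd_type x == t0)) => [/eqP|] tx; first exact: fixV.
have tcx : hd_type (c x) != t0 by rewrite corr_ti //; left.
have eS : S (c x) = S x.
  apply/setP => u; case: (boolP (#|u| == 2)) => [/eqP hu|hu].
    have tv : hd_type (mkV u) = t0 by rewrite /hd_type mkV_val.
    have sv : S (mkV u) = [set u] by rewrite mkV_val.
    rewrite -(incV tv sv tcx) -(incV tv sv tx) -{1}(fixV _ tv).
    by rewrite corrI.
  apply/idP/idP => /S_2sets /eqP; by rewrite (negbTE hu).
apply: val_inj; rewrite (valE (c x)) (valE x) eS; congr pair.
have tcx1 : (hd_type (c x) == t1) = (hd_type x == t1) by rewrite corr_ti //; right.
case: (I4_cases (hd_type x)) => ex; rewrite ex in tx tcx1 *.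
- by rewrite eqxx in tx.
- by apply/eqP; rewrite tcx1.
- case: (I4_cases (hd_type (c x))) => ec; rewrite ec in tcx tcx1 *.
  + by rewrite eqxx in tcx.
  + by rewrite eqxx in tcx1.
  + done.
  + by case: (no23 ex ec (esym eS)).
- case: (I4_cases (hd_type (c x))) => ec; rewrite ec in tcx tcx1 *.
  + by rewrite eqxx in tcx.
  + by rewrite eqxx in tcx1.
  + by case: (no23 ec ex eS).
  + done.
Qed.

Lemma pat4_Lc : pat4 Lc. Proof. by vm_compute. Qed.
Lemma size_Ls : size Ls = 4. Proof. by rewrite size_map. Qed.

Lemma card_AutGamma_le : #|AutGamma hd_type hd_inc| <= 120.
Proof.
pose F (a : {perm HDX}) := map (fun l => vc (a l)) Ls.
rewrite -Tlist_size cardE -(size_map F); apply: uniq_leq_size.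
  rewrite map_inj_in_uniq ?enum_uniq // => a b; rewrite !mem_enum !inE => ha hb e.
  have el : forall l, l \in Ls -> a l = b l.
    move=> l hl; have tl := Ls_t0 hl.
    have : vc (a l) = vc (b l).
      have := congr1 (fun s => nth [::] s (index l Ls)) e; rewrite /F.
      by rewrite !(nth_map xdef) ?index_mem // nth_index.
    by move/eqP; rewrite vc_eq ?corr_t0 // => /eqP.
  have hc : corr (a * b^-1) by apply: corrM => //; apply: corrV.
  have e1 : a * b^-1 = 1.
    by apply: rigid => // l hl; rewrite permM el // permK.
  by rewrite -[a]mulg1 -(mulVg b) mulgA e1 mul1g.
move=> t /mapP [a]; rewrite mem_enum inE => ha ->.
have tL : forall i, i < 4 -> hd_type (nth xdef Ls i) = t0.
  by move=> i hi; apply: Ls_t0; rewrite mem_nth ?size_Ls.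
have tA : forall i, i < 4 -> hd_type (a (nth xdef Ls i)) = t0.
  by move=> i hi; apply: corr_t0 => //; apply: tL.
rewrite mem_filter; apply/andP; split.
  suff -> : pat4 (F a) = pat4 Lc by exact: pat4_Lc.
  rewrite /pat4; apply: eq_in_all => ij /allpairsP [[i j] [hi hj ->]] /=.
  rewrite mem_iota /= add0n in hi; rewrite mem_iota /= add0n in hj.
  rewrite /F -Ls_vc !(nth_map xdef) ?size_Ls //.
  rewrite !vc_eq ?tA ?tL // !vc_disj ?tA ?tL // (inj_eq perm_inj) adj_corr //.
have hv : forall p, p \in P2 -> vc (a (mkV (dec p))) \in P2.
  move=> p hp; apply: vc_P2; apply: corr_t0 => //.
  by rewrite /hd_type mkV_val ?dec_card.
rewrite /F /Ls [map _ _]/=.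
apply: (@allpairs_f _ _ _ cat _ _ [:: vc (a (mkV (dec [:: 0; 1]%N))); vc (a (mkV (dec [:: 2; 3]%N)))]
                                 [:: vc (a (mkV (dec [:: 2; 4]%N))); vc (a (mkV (dec [:: 0; 4]%N)))]).
  by apply: (@allpairs_f _ _ _ (fun x y => [:: x; y])); apply: hv.
by apply: (@allpairs_f _ _ _ (fun x y => [:: x; y])); apply: hv.
Qed.


Definition tsw (i : 'I_4) : 'I_4 := if i == t2 then t3 else if i == t3 then t2 else i.
Definition tmap (s : {perm 'I_5}) (i : 'I_4) : 'I_4 := if odd_perm s then tsw i else i.
Definition setmap (s : {perm 'I_5}) (A : {set {set 'I_5}}) : {set {set 'I_5}} :=
  [set s @: (v : {set 'I_5}) | v in A].
Definition fr (s : {perm 'I_5}) (p : 'I_4 * {set {set 'I_5}}) := (tmap s p.1, setmap s p.2).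

Lemma tswK : involutive tsw.
Proof. by move=> i; case: (I4_cases i) => ->. Qed.

Lemma tmap_le2 s i : (2 <= val (tmap s i)) = (2 <= val i).
Proof. by rewrite /tmap; case: odd_perm => //; case: (I4_cases i) => ->. Qed.

Lemma tmap_inj s : injective (tmap s).
Proof. rewrite /tmap; case: odd_perm => //; exact: (can_inj tswK). Qed.

Lemma imsetK (s : {perm 'I_5}) (v : {set 'I_5}) : s^-1 @: (s @: v) = v.
Proof. by rewrite -imset_comp -[RHS]imset_id; apply: eq_imset => x /=; rewrite permK. Qed.

Lemma imsetM (s t : {perm 'I_5}) (v : {set 'I_5}) : (s * t) @: v = t @: (s @: v).
Proof. by rewrite -imset_comp; apply: eq_imset => x /=; rewrite permM. Qed.

Lemma setmapK s A : setmap s^-1 (setmap s A) = A.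
Proof. by rewrite /setmap -imset_comp -[RHS]imset_id; apply: eq_imset => v /=; rewrite imsetK. Qed.

Lemma setmapM s t A : setmap (s * t) A = setmap t (setmap s A).
Proof. by rewrite /setmap -imset_comp; apply: eq_imset => v /=; rewrite imsetM. Qed.

Lemma imset2E (s : {perm 'I_5}) (a b : 'I_5) : s @: [set a; b] = [set s a; s b].
Proof. by rewrite imsetU1 imset_set1. Qed.

Lemma setmap1 s (v : {set 'I_5}) : setmap s [set v] = [set s @: v].
Proof. by rewrite /setmap imset_set1. Qed.

Lemma setmap2 s (v w : {set 'I_5}) : setmap s [set v; w] = [set s @: v; s @: w].
Proof. by rewrite /setmap imsetU1 imset_set1. Qed.

Lemma setmap_pent s t : setmap s (pentagon t) = pentagon (t * s).
Proof.
rewrite /setmap /pentagon -imset_comp; apply: eq_imset => k /=.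
by rewrite imset2E !permM.
Qed.

Lemma card_im (s : {perm 'I_5}) (v : {set 'I_5}) : #|s @: v| = #|v|.
Proof. by apply: card_imset; apply: perm_inj. Qed.

Lemma disj_im (s : {perm 'I_5}) (v w : {set 'I_5}) :
  [disjoint s @: v & s @: w] = [disjoint v & w].
Proof.
rewrite -!setI_eq0 -imsetI; last by move=> x y _ _; apply: perm_inj.
apply/eqP/eqP => [e|->]; last by rewrite imset0.
by rewrite -(imsetK s (v :&: w)) e imset0.
Qed.

Lemma fr_wf s (x : HDX) : hd_wf (fr s (val x)).
Proof.
rewrite (valE x) /fr /=; case: (hdP x) => [v -> hv ->|v w -> hv hw hd ->|t -> ht ->|t -> ht ->].
- by rewrite /tmap if_same setmap1; apply: mkV_wf; rewrite card_im.
- rewrite /tmap if_same setmap2; apply: mkE_wf; rewrite ?card_im ?disj_im //.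
- rewrite setmap_pent /tmap; case: (boolP (odd_perm s)) => hs /=.
    by apply/existsP; exists (t * s); rewrite odd_permM (negbTE ht) hs eqxx.
  by apply/existsP; exists (t * s); rewrite odd_permM (negbTE ht) (negbTE hs) eqxx.
- rewrite setmap_pent /tmap; case: (boolP (odd_perm s)) => hs /=.
    by apply/existsP; exists (t * s); rewrite odd_permM ht hs eqxx.
  by apply/existsP; exists (t * s); rewrite odd_permM ht (negbTE hs) eqxx.
Qed.

Definition fX s (x : HDX) : HDX := Sub (fr s (val x)) (fr_wf s x).

Lemma frK s p : fr s^-1 (fr s p) = p.
Proof.
case: p => i A; rewrite /fr /= setmapK /tmap odd_permV.
by case: odd_perm; rewrite ?tswK.
Qed.

Lemma fXK s : cancel (fX s) (fX s^-1).
Proof. by move=> x; apply: val_inj; rewrite /fX /= frK. Qed.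

Lemma fX_inj s : injective (fX s).
Proof. exact: (can_inj (fXK s)). Qed.

Definition rho s : {perm HDX} := perm (@fX_inj s).

Lemma rhoE s x : val (rho s x) = fr s (val x).
Proof. by rewrite permE. Qed.

Lemma rho_type s x : hd_type (rho s x) = tmap s (hd_type x).
Proof. by rewrite /hd_type rhoE. Qed.

Lemma rho_S s x : S (rho s x) = setmap s (S x).
Proof. by rewrite rhoE. Qed.

Lemma rhoM s t : rho (s * t) = rho s * rho t.
Proof.
apply/permP => x; apply: val_inj; rewrite permM !rhoE /fr /= setmapM; congr pair.
rewrite /tmap odd_permM; case: (odd_perm s); case: (odd_perm t) => //=.
by rewrite tswK.
Qed.

Lemma sub_map s A B : (setmap s A \subset setmap s B) = (A \subset B).
Proof.
apply/idP/idP => [h|h]; last by apply: imsetS.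
by rewrite -(setmapK s A) -(setmapK s B); apply: imsetS.
Qed.

Lemma se_map s A B : share_edge A B -> share_edge (setmap s A) (setmap s B).
Proof.
case/existsP => v /existsP [w /and5P [pv pw d sA sB]].
apply/existsP; exists (s @: v); apply/existsP; exists (s @: w).
rewrite /pvertex in pv pw *.
by rewrite !card_im pv pw disj_im d -setmap2 !sub_map sA sB.
Qed.

Lemma se_mapE s A B : share_edge (setmap s A) (setmap s B) = share_edge A B.
Proof.
apply/idP/idP => [h|]; last exact: se_map.
by rewrite -(setmapK s A) -(setmapK s B); apply: se_map.
Qed.

Lemma rho_corr s : corr (rho s).
Proof.
apply/forallP => x; apply/forallP => y; apply/andP; split.
  by rewrite !rho_type (inj_eq (@tmap_inj s)) eqxx.
rewrite /hd_inc !rho_type (inj_eq (@tmap_inj s)) !tmap_le2 !rho_S se_mapE !sub_map.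
by rewrite eqxx.
Qed.

Lemma three (i : 'I_5) : exists j k : 'I_5, [/\ i != j, i != k & j != k].
Proof.
case: i => [[|[|[|[|[|?]]]]] hi] //.
- by exists (i5 1), (i5 2); rewrite -!(inj_eq val_inj) /= /i5 !vinord.
- by exists (i5 0), (i5 2); rewrite -!(inj_eq val_inj) /= /i5 !vinord.
- by exists (i5 0), (i5 1); rewrite -!(inj_eq val_inj) /= /i5 !vinord.
- by exists (i5 0), (i5 1); rewrite -!(inj_eq val_inj) /= /i5 !vinord.
- by exists (i5 0), (i5 1); rewrite -!(inj_eq val_inj) /= /i5 !vinord.
Qed.

Lemma rho_inj s : rho s = 1 -> s = 1.
Proof.
move=> e.
have fixv : forall v : {set 'I_5}, #|v| = 2 -> s @: v = v.
  move=> v hv; have h : rho s (mkV v) = mkV v by rewrite e perm1.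
  have := congr1 (fun x => S x) h.
  rewrite rho_S mkV_val // setmap1 => /setP /(_ (s @: v)).
  by rewrite !inE eqxx => /esym /eqP.
have m : forall i j : 'I_5, i != j -> s i \in [set i; j].
  move=> i j ij; have h2 : #|[set i; j]| = 2 by rewrite cards2 ij.
  by rewrite -(fixv _ h2); apply: imset_f; rewrite !inE eqxx.
apply/permP => i; rewrite perm1.
have [j [k [ij ik jk]]] := three i.
move: (m _ _ ij) (m _ _ ik); rewrite !inE => /orP [/eqP ->|/eqP e1] // /orP [/eqP ->|/eqP e2] //.
by move: jk; rewrite -e1 -e2 eqxx.
Qed.

Lemma xF_wf : hd_wf (t2, pentagon 1).
Proof. by apply/existsP; exists 1; rewrite odd_perm1 eqxx. Qed.
Definition xF : HDX := Sub (t2, pentagon 1) xF_wf.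
Lemma xP_wf : hd_wf (t3, pentagon tau).
Proof. by apply/existsP; exists tau; rewrite odd_tau eqxx. Qed.
Definition xP : HDX := Sub (t3, pentagon tau) xP_wf.

Lemma rho_tp s : [forall x, hd_type (rho s x) == hd_type x] = ~~ odd_perm s.
Proof.
apply/forallP/idP => [H|hs x].
  by apply/negP => hs; have := H xF; rewrite rho_type /tmap hs.
by rewrite rho_type /tmap (negbTE hs).
Qed.

Definition rhom := @Morphism _ _ [set: {perm 'I_5}] rho (in2W rhoM).

Lemma injm_rho : 'injm rhom.
Proof.
apply/subsetP => s; rewrite !inE /= => /eqP hs.
by rewrite (rho_inj hs) ?inE.
Qed.


Lemma AutGamma_rho : AutGamma hd_type hd_inc = rhom @* Sym 'I_5.
Proof.
apply/eqP; rewrite eq_sym eqEcard; apply/andP; split.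
  by apply/subsetP => a /morphimP [s _ _ ->]; rewrite inE rho_corr.
by rewrite card_injm ?injm_rho ?subsetT // card_Sym5 card_AutGamma_le.
Qed.

Lemma AutIGamma_rho : AutIGamma hd_type hd_inc = rhom @* Alt 'I_5.
Proof.
apply/setP => a; rewrite inE AutGamma_rho; apply/andP/idP => [[/morphimP [s _ _ ->] h]|].
  by apply: mem_morphim; [rewrite inE | rewrite Alt_even -rho_tp].
case/morphimP => s _ hs ->; split; first by apply: mem_morphim; apply: in_setT.
by rewrite rho_tp -Alt_even.
Qed.

Definition phi (a : {perm gT}) : {perm HDX} := rho (invm injm_psi a).

Lemma phi_psi s : phi (psi s) = rho s.
Proof. by rewrite /phi (invmE injm_psi) ?inE. Qed.

Lemma psi1 : psi 1 = 1.
Proof. by apply: (mulgI (psi 1)); rewrite -psiM !mulg1. Qed.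

Lemma rho1 : rho 1 = 1.
Proof. by apply: (mulgI (rho 1)); rewrite -rhoM !mulg1. Qed.

Lemma phi_misom (H : {group {perm 'I_5}}) : misom (psim @* H) (rhom @* H) phi.
Proof.
apply/andP; split.
  apply/morphicP => a b ha hb.
  have sH : psim @* H \subset psim @* [set: {perm 'I_5}] by apply: morphimS; apply: subsetT.
  rewrite /phi (morphM (invm injm_psi)) ?(subsetP sH) //.
  exact: rhoM.
apply/eqP/setP => b; apply/imsetP/idP => [[a]|].
  rewrite inE => /andP [na /morphimP [s _ hs ea]] ->.
  rewrite ea /= phi_psi !inE; apply/andP; split; last first.
    by apply: (mem_morphim rhom); rewrite ?inE.
  apply: contra na => /eqP /rho_inj es; move: ea; rewrite es /= psi1 => ->.
  by rewrite inE.
rewrite inE => /andP [nb /morphimP [s _ hs eb]].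
exists (psi s); last by rewrite phi_psi eb.
rewrite !inE; apply/andP; split; last by apply: mem_morphim; rewrite ?inE.
apply: contra nb => /eqP /psi_inj es; rewrite eb es /= rho1.
by [].
Qed.

Lemma is_inc : is_incidence_system hd_type hd_inc.
Proof.
split.
- move=> i; case: (I4_cases i) => ->.
  + by exists xdef.
  + exact: t1_ex.
  + by exists xF.
  + by exists xP.
- exact: hd_incC.
- by move=> x y e; rewrite /hd_inc e eqxx.
Qed.

Theorem mainTheorem4 :
  incidence_geometric_representation A5xC2 hd_type hd_inc
  /\ (Inn A5xC2 \isog Alt 'I_5)%g /\ (Aut A5xC2 \isog Sym 'I_5)%g.
Proof.
split; [|split].
- split; first exact: is_inc.
  exists phi, phi; split => //.
  + by rewrite Inn_psi AutIGamma_rho; apply: phi_misom.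
  + by rewrite Aut_psi AutGamma_rho; apply: phi_misom.
- by rewrite Inn_psi isog_sym; apply: sub_isog; [apply: subsetT | apply: injm_psi].
- by rewrite Aut_psi isog_sym; apply: sub_isog; [apply: subsetT | apply: injm_psi].
Qed.
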